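(* Let $\Gamma=(N,A,u)$ be a finite normal form game and let $G\le S_\Gamma$ be player transitive. There exists a matching $M$ of $A_1,\dots,A_n$ such that $M_{\overrightarrow{G}}=G$ if and only if $G$ is strategy trivial.
   Context: $S_\Gamma$ is the group of game bijections $g=(\pi;(\tau_i)_{i\in N})$ from $\Gamma$ to itself ($\pi\in S_N$, bijections $\tau_i:A_i\to A_{\pi(i)}$), with composition $(\eta;(\phi_j))\circ(\pi;(\tau_i))=(\eta\circ\pi;(\phi_{\pi(i)}\circ\tau_i)_{i\in N})$; write $g(i)=\pi(i)$, $g(s_i)=\tau_i(s_i)$. $\overrightarrow{G}\le S_N$ is the set of player permutations of elements of $G$. $G$ is player transitive if $\overrightarrow{G}$ acts transitively on $N$. $G$ is strategy trivial if for each $i\in N$, $g(s_i)=s_i$ for all $g\in G$ with $g(i)=i$ and all $s_i\in A_i$. A matching of $A_1,\dots,A_n$ is $M\subseteq\times_{i\in N}A_i$ such that for each $i$ and $a_i\in A_i$ there is exactly one $s\in M$ with $s_i=a_i$; $M_{ij}:A_i\to A_j$ sends $a_i$ to the unique $a_j$ with some $s\in M$ having $s_i=a_i,s_j=a_j$; $M_\pi=(\pi;(M_{i\pi(i)})_{i\in N})$ and $M_H=\{M_\pi:\pi\in H\}$ for $H\subseteq S_N$. *)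

(* Defs.v *)
From HB Require Import structures.
From mathcomp Require Import all_boot all_order all_algebra all_fingroup.
Set Implicit Arguments. Unset Strict Implicit. Unset Printing Implicit Defensive.

(* A finite normal form game Gamma = (N, A, u): players N = 'I_n,
   action sets A i : finType (nonempty), payoffs u i : profile -> R. *)

Definition profile (n : nat) (A : 'I_n -> finType) := {dffun forall i : 'I_n, A i}.

(* A game bijection
   g = (pi; (tau_i)_i) is encoded as the permutation of this disjoint union
   sending (i, s_i) to (pi i, tau_i s_i). *)
Definition strat (n : nat) (A : 'I_n -> finType) := {i : 'I_n & A i}.

Definition has_player_perm n (A : 'I_n -> finType)
  (g : {perm strat A}) (pi : {perm 'I_n}) : Prop :=
  forall x : strat A, tag (g x) = pi (tag x).

Definition is_game_bij n (A : 'I_n -> finType) (g : {perm strat A}) : Prop :=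
  exists pi : {perm 'I_n}, has_player_perm g pi.

Definition player_perms n (A : 'I_n -> finType) (G : {set {perm strat A}})
  : {set {perm 'I_n}} :=
  [set pi : {perm 'I_n} | [exists g in G, [forall x : strat A, tag (g x) == pi (tag x)]]].

Definition player_transitive n (A : 'I_n -> finType) (G : {set {perm strat A}}) : Prop :=
  forall i j : 'I_n, exists2 pi, pi \in player_perms G & pi i = j.

Definition strategy_trivial n (A : 'I_n -> finType) (G : {set {perm strat A}}) : Prop :=
  forall g pi, g \in G -> has_player_perm g pi ->
  forall i : 'I_n, pi i = i -> forall s : A i, g (Tagged A s) = Tagged A s.

Definition is_matching n (A : 'I_n -> finType) (M : {set profile A}) : Prop :=
  forall (i : 'I_n) (a : A i), exists! s : profile A, s \in M /\ s i = a.

(* The map underlying M_pi = (pi; (M_{i pi(i)})_i): (i, a) |-> (pi i, M_{i pi(i)} a),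
   where M_{ij} a is the j-component of the unique s in M with s_i = a.
   (The fallback branch is never used when M is a matching.) *)
Definition matching_map n (A : 'I_n -> finType) (M : {set profile A})
  (pi : {perm 'I_n}) (x : strat A) : strat A :=
  let: existT i a := x in
  match [pick s in M | s i == a] with
  | Some s => Tagged A (s (pi i))
  | None => x
  end.

Definition matching_realizes n (A : 'I_n -> finType) (M : {set profile A})
  (H : {set {perm 'I_n}}) (G : {set {perm strat A}}) : Prop :=
  (forall g, g \in G -> exists2 pi, pi \in H & g =1 matching_map M pi) /\
  (forall pi, pi \in H -> exists2 g, g \in G & g =1 matching_map M pi).

(* Main.v *)
Require Import Defs.
From HB Require Import structures.
From mathcomp Require Import all_boot all_order all_algebra all_fingroup.

Lemma tag_cong n (A : 'I_n -> finType) (g : {perm strat A}) :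
  is_game_bij g -> forall x y, tag x = tag y -> tag (g x) = tag (g y).
Proof. by case=> pi gp x y e; rewrite !gp e. Qed.

Theorem theorem4p23 (R : numDomainType) (n : nat) (A : 'I_n -> finType)
  (u : 'I_n -> profile A -> R)
  (A_nonempty : forall i : 'I_n, 0 < #|A i|)
  (G : {group {perm strat A}})
  (G_game : forall g, g \in G -> is_game_bij g)
  (G_trans : player_transitive G) :
  (exists M : {set profile A},
     is_matching M /\ matching_realizes M (player_perms G) G)
  <-> strategy_trivial G.
Proof.
split.
- move=> [M [Mm [MR1 _]]] g pi gG gpi i pii s.
  have [pi' _ gE] := MR1 g gG.
  have := gE (Tagged A s); rewrite /matching_map /=.
  case: pickP => [s0 /andP[_ /eqP s0i] | none]; last first.
    have [s1 [[s1M s1i] _]] := Mm i s.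
    by move: (none s1); rewrite s1M s1i eqxx.
  move=> E.
  have pii' : pi' i = i.
    by have := gpi (Tagged A s); rewrite E /= pii.
  by rewrite E -s0i pii'.
- move=> ST.
  have [i0 _|empty] := pickP (@predT 'I_n); last first.
    have nostrat : forall x : strat A, False by case=> i; have := empty i.
    exists setT; split.
      by move=> i; have := empty i.
    split.
      move=> g gG; exists 1%g; last by move=> x; case: (nostrat x).
      rewrite inE; apply/existsP; exists 1%g; rewrite group1 /=.
      by apply/forallP => x; case: (nostrat x).
    move=> pi _; exists 1%g; first exact: group1.
    by move=> x; case: (nostrat x).
  have L : forall g h, g \in G -> h \in G -> forall a0 : A i0,
      tag (g (Tagged A a0)) = tag (h (Tagged A a0)) ->
      forall a : A i0, g (Tagged A a) = h (Tagged A a).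
    move=> g h gG hG a0 e a.
    have kG : (g * h^-1)%g \in G by rewrite groupM ?groupV.
    have [pk kp] := G_game _ kG.
    have pki0 : pk i0 = i0.
      have := kp (Tagged A a0); rewrite /= permM => <-.
      rewrite (@tag_cong _ _ h^-1 (G_game _ (groupVr hG)) _ (h (Tagged A a0))) //.
      by rewrite permK.
    have := ST _ pk kG kp i0 pki0 a; rewrite permM => H.
    by rewrite -[in RHS]H permKV.
  have Exg : forall j, exists2 g, g \in G & forall a : A i0, tag (g (Tagged A a)) = j.
    move=> j; have [pi piH pij] := G_trans i0 j.
    move: piH; rewrite inE => /existsP [g /andP [gG /forallP gp]].
    by exists g => // a; rewrite (eqP (gp _)) /= pij.
  have ggS : forall j, {g : {perm strat A} | g \in G /\ forall a : A i0, tag (g (Tagged A a)) = j}.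
    move=> j; case: (pickP (fun g : {perm strat A} => (g \in G) && [forall a : A i0, tag (g (Tagged A a)) == j])) => [g /andP[gG /forallP gp] | none] /=.
      by exists g; split => // a; apply/eqP.
    exfalso; have [g gG gp] := Exg j; move: (none g); rewrite gG /=.
    have -> // : [forall a : A i0, tag (g (Tagged A a)) == j].
    by apply/forallP=> a; rewrite gp.
  pose gg j := sval (ggS j).
  have ggP : forall j, gg j \in G /\ forall a : A i0, tag (gg j (Tagged A a)) = j.
    by move=> j; exact: (proj2_sig (ggS j)).
  have ggtag : forall j (a : A i0), tag (gg j (Tagged A a)) = j by move=> j a; exact: (ggP j).2.
  pose s (a : A i0) : profile A := [ffun j => etagged (ggtag j a)].
  have sE : forall a j, Tagged A (s a j) = gg j (Tagged A a).
    by move=> a j; rewrite ffunE etaggedK.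
  have sG : forall a g, g \in G -> Tagged A (s a (tag (g (Tagged A a)))) = g (Tagged A a).
    move=> a g gG; rewrite sE; apply: (L _ _ (ggP _).1 gG a) => //.
  have [a0 _] := card_gt0P (A_nonempty i0).
  have fiber : forall i (b : A i), exists a : A i0, Tagged A (s a i) = Tagged A b.
    move=> i b.
    have p : tag ((gg i)^-1%g (Tagged A b)) = i0.
      rewrite (@tag_cong _ _ (gg i)^-1 (G_game _ (groupVr (ggP i).1)) _ (gg i (Tagged A a0))).
        by rewrite permK.
      by rewrite (ggtag i a0).
    exists (etagged p); by rewrite sE (etaggedK p) permKV.
  pose M := [set s a | a : A i0].
  have Rl : forall g pi, g \in G -> has_player_perm g pi -> g =1 matching_map M pi.
    move=> g pi gG gp [i b] /=.
    case: pickP => [t /andP[/imsetP[a _ ->] /eqP tb] | none].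
      rewrite -tb.
      have := sG a _ (groupM (ggP i).1 gG).
      rewrite !permM gp ggtag => H.
      transitivity (g (gg i (Tagged A a))); first by rewrite -sE.
      by rewrite -H.
    have [a ea] := fiber i b.
    by move: (none (s a)); rewrite (eq_from_Tagged ea) eqxx andbT; move/negbT/imsetP; case; exists a.
  exists M; split.
    move=> i b; have [a ea] := fiber i b.
    exists (s a); split.
      by split; [apply/imsetP; exists a | exact: eq_from_Tagged ea].
    move=> t [/imsetP [a' _ ->] ta'].
    have : Tagged A (s a' i) = Tagged A (s a i) by rewrite ea ta'.
    rewrite !sE => /perm_inj E; by rewrite (eq_from_Tagged E).
  split.
    move=> g gG; have [pi gp] := G_game g gG.
    exists pi; last exact: Rl.
    rewrite inE; apply/existsP; exists g; rewrite gG /=.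
    by apply/forallP => x; rewrite gp.
  move=> pi piH; move: (piH); rewrite inE => /existsP [g /andP [gG /forallP gp]].
  exists g => //; apply: Rl gG _ => x; exact/eqP.
Qed.
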